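(* Let $f$ be an additive function from the positive integers to the nonnegative integers with $f(p)\ge1$ for every prime $p$. Every positive integer is $f$-practical if and only if $f(p^k)\le 1+\sum_{i=0}^{k-1}f(p^i)$ for every prime $p$ and every positive integer $k$.
   Context: $f$ additive means $f(ab)=f(a)+f(b)$ whenever $\gcd(a,b)=1$ (so $f(1)=0$). $S_f(n)=\sum_{d\mid n}f(d)$. A positive integer $n$ is $f$-practical if every positive integer $m\le S_f(n)$ equals $\sum_{d\in\mathcal{D}}f(d)$ for some set $\mathcal{D}$ of distinct divisors of $n$. *)

(* Defs.v *)
From mathcomp Require Import all_boot.
Set Implicit Arguments. Unset Strict Implicit. Unset Printing Implicit Defensive.

(* f : nat -> nat represents a function on positive integers; its value at 0
   is irrelevant (never used). *)

Definition additive (f : nat -> nat) : Prop :=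
  forall a b, 0 < a -> 0 < b -> coprime a b -> f (a * b) = f a + f b.

Definition S_f (f : nat -> nat) (n : nat) : nat :=
  \sum_(d <- divisors n) f d.

Definition f_practical (f : nat -> nat) (n : nat) : Prop :=
  forall m, 0 < m -> m <= S_f f n ->
    exists D : seq nat, [/\ uniq D, (forall d, d \in D -> d %| n)
                          & \sum_(d <- D) f d = m].

(* Main.v *)
Require Import Defs.
From mathcomp Require Import all_boot.
From mathcomp Require Import zify.

Lemma sum_sub (F : nat -> nat) (s t : seq nat) :
  uniq s -> {subset s <= t} -> \sum_(x <- s) F x <= \sum_(x <- t) F x.
Proof.
elim: s t => [|x s IH] t /=; first by rewrite big_nil.
case/andP => xs us sub.
rewrite big_cons (big_rem x (sub x (mem_head _ _))) /= leq_add2l.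
apply: IH => // y ys.
have yx : y != x by apply: contraNneq xs => <-.
by apply: rem_mem => //; apply: sub; rewrite inE ys orbT.
Qed.

Definition complete (f : nat -> nat) (s : seq nat) :=
  forall m, m <= \sum_(d <- s) f d ->
    exists D : seq nat, [/\ uniq D, {subset D <= s} & \sum_(d <- D) f d = m].

Lemma complete_perm f s t : perm_eq s t -> complete f s -> complete f t.
Proof.
move=> pst cs m; rewrite -(perm_big _ pst) => /cs [D [uD sD eD]].
by exists D; split => // x /sD; rewrite (perm_mem pst).
Qed.

Lemma complete_cons f s b : complete f s -> b \notin s ->
  f b <= 1 + \sum_(d <- s) f d -> complete f (b :: s).
Proof.
move=> cs bs fb m; rewrite big_cons => hm.
case: (leqP m (\sum_(d <- s) f d)) => h.
  have [D [uD sD eD]] := cs m h.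
  by exists D; split => // x /sD xs; rewrite inE xs orbT.
have h2 : m - f b <= \sum_(d <- s) f d by lia.
have [D [uD sD eD]] := cs _ h2.
exists (b :: D); split.
- rewrite /= uD andbT; apply: contra bs; exact: sD.
- by move=> x; rewrite !inE => /orP [->|/sD ->]; rewrite ?orbT.
- rewrite big_cons eD; lia.
Qed.

Lemma f1 f : additive f -> f 1 = 0.
Proof. move=> add; have := add 1 1 isT isT isT; rewrite muln1; lia. Qed.

Lemma key f n N : additive f ->
  (forall p k, prime p -> 0 < k -> f (p ^ k) <= 1 + \sum_(0 <= i < k) f (p ^ i)) ->
  0 < n -> N %| n ->
  f N <= 1 + \sum_(d <- [seq d <- divisors n | d < N]) f d.
Proof.
move=> add H n0 Nn.
have N0 : 0 < N by apply: dvdn_gt0 Nn.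
case: (ltnP 1 N) => N1; last first.
  have -> : N = 1 by lia.
  by rewrite f1.
set p := pdiv N.
have pp : prime p by apply: pdiv_prime.
have [d cpd eN] := pfactor_coprime pp N0.
set j := logn p N in eN.
have j0 : 0 < j by rewrite /j logn_gt0 mem_primes pp N0 pdiv_dvd.
have d0 : 0 < d by move: N0; rewrite eN muln_gt0 => /andP [].
have p1 : 1 < p by apply: prime_gt1.
have addp i : f (d * p ^ i) = f d + f (p ^ i).
  by apply: add => //; [rewrite expn_gt0 ltnW | rewrite coprime_sym coprimeXl].
pose L := [seq d * p ^ i | i <- index_iota 0 j].
have uL : uniq L.
  rewrite map_inj_uniq ?iota_uniq // => a b /eqP.
  by rewrite eqn_pmul2l // eqn_exp2l // => /eqP.
have sL : {subset L <= [seq d <- divisors n | d < N]}.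
  move=> x /mapP [i]; rewrite mem_index_iota => /andP [_ ij] ->.
  rewrite mem_filter -dvdn_divisors // eN ltn_pmul2l // ltn_exp2l // ij /=.
  apply: dvdn_trans Nn; rewrite eN dvdn_mul // dvdn_exp2l // ltnW //.
have := sum_sub f _ _ uL sL.
rewrite big_map.
under eq_bigr => i _ do rewrite addp.
rewrite big_split /= sum_nat_const_nat subn0.
rewrite eN addp.
have := H p j pp j0.
move=> h1 h2.
have : f d <= j * f d by rewrite leq_pmull.
lia.
Qed.

Lemma complete_div f n : additive f ->
  (forall p k, prime p -> 0 < k -> f (p ^ k) <= 1 + \sum_(0 <= i < k) f (p ^ i)) ->
  0 < n -> complete f (divisors n).
Proof.
move=> add H n0.
have step N : complete f [seq d <- divisors n | d < N].
  elim: N => [|N IH].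
    move=> m; rewrite (eq_filter (a2 := pred0)) // filter_pred0 big_nil leqn0 => /eqP ->.
    by exists [::]; split => //; rewrite big_nil.
  case Nd: (N \in divisors n); last first.
    rewrite (eq_in_filter (a2 := fun d => d < N)) // => x xd.
    rewrite ltnS leq_eqVlt; case: eqP => // ex; by rewrite -ex xd in Nd.
  apply: (@complete_perm f (N :: [seq d <- divisors n | d < N])).
    apply: uniq_perm.
    - by rewrite /= mem_filter ltnn filter_uniq // divisors_uniq.
    - by rewrite filter_uniq // divisors_uniq.
    move=> x; rewrite !inE !mem_filter.
    case: (x =P N) => [->|/eqP xN] /=; first by rewrite Nd ltnSn.
    by rewrite [x < N.+1]ltnS [x <= N]leq_eqVlt (negbTE xN).
  apply: complete_cons => //; first by rewrite mem_filter ltnn.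
  apply: key => //; by rewrite dvdn_divisors.
have := step n.+1.
rewrite (eq_in_filter (a2 := predT)) ?filter_predT // => x.
rewrite -dvdn_divisors // => xn; rewrite ltnS; exact: dvdn_leq.
Qed.

Theorem corollary6p2 (f : nat -> nat) :
  additive f ->
  (forall p, prime p -> 1 <= f p) ->
  ((forall n, 0 < n -> f_practical f n) <->
   (forall p k, prime p -> 0 < k -> f (p ^ k) <= 1 + \sum_(0 <= i < k) f (p ^ i))).
Proof.
move=> add _; split; last first.
  move=> H n n0 m m0 hm.
  have [D [uD sD eD]] := @complete_div f n add H n0 m hm.
  by exists D; split => // d /sD; rewrite -dvdn_divisors.
move=> P p k pp k0; rewrite leqNgt; apply/negP => hlt.
set A := \sum_(0 <= i < k) f (p ^ i) in hlt.
have pk0 : 0 < p ^ k by rewrite expn_gt0 prime_gt0.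
have p1 : 1 < p by apply: prime_gt1.
have uM : forall k', uniq [seq p ^ i | i <- index_iota 0 k'].
  move=> k'; rewrite map_inj_uniq ?iota_uniq // => a b /eqP.
  by rewrite eqn_exp2l // => /eqP.
have hS : 1 + A <= S_f f (p ^ k).
  have sb : {subset [seq p ^ i | i <- index_iota 0 k.+1] <= divisors (p ^ k)}.
    move=> x /mapP [i]; rewrite mem_index_iota => /andP [_ ik] ->.
    by rewrite -dvdn_divisors // dvdn_exp2l.
  have := sum_sub f _ _ (uM k.+1) sb.
  rewrite big_map big_nat_recr // -/A /S_f.
  move=> h; apply: leq_trans h; rewrite /=; lia.
have [D [uD sD eD]] := P _ pk0 (1 + A) isT hS.
case pD: (p ^ k \in D).
  move: eD; rewrite (big_rem _ pD) /=; lia.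
have sub : {subset D <= [seq p ^ i | i <- index_iota 0 k]}.
  move=> x xD; have := sD x xD; case/(dvdn_pfactor _ _ pp) => i ik ex.
  apply/mapP; exists i => //; rewrite mem_index_iota /= ltn_neqAle ik andbT.
  by apply: contraFneq pD => ei; rewrite -ei -ex.
have := sum_sub f _ _ uD sub; rewrite big_map -/A eD; lia.
Qed.
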